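(* Let $F$ be a field, $U,V$ finite-dimensional $F$-vector spaces with $\dim U=n$ and $\dim V=m$, $A:U\times U\to V$ an alternating bilinear map whose image spans $V$, $u_1<\dots<u_n$ an ordered basis of $U$, and $\mathcal{B}$, $\mathcal{W}(\mathcal{B})$ as in the context. If $\mathcal{B}$ is not a tree of height one, then \[|\mathcal{W}(\mathcal{B})|\ge\left(\sum_{i=2}^{m+1}(n-i)\right)+(m-2),\] and in particular $\dim\operatorname{Im}\Psi\ge\left(\sum_{i=2}^{m+1}(n-i)\right)+(m-2)$.
   Context: $\mathcal{Y}$ is the set of $2$-element subsets of $\{1,\dots,n\}$, totally ordered by $\{i,j\}<\{r,s\}$ iff $\max\{i,j\}<\max\{r,s\}$, or the maxima are equal to $a$ and the remaining element of $\{i,j\}\setminus\{a\}$ is smaller than that of $\{r,s\}\setminus\{a\}$. $\mathcal{B}$ is constructed as follows: $\mathcal{B}_0=B_0=\emptyset$; inductively let $\{i,j\}$ ($i<j$) be the least element of $\mathcal{Y}$ with $A(u_i,u_j)\notin\operatorname{span}(B_k)$, and set $\mathcal{B}_{k+1}=\mathcal{B}_k\cup\{\{i,j\}\}$, $B_{k+1}=B_k\cup\{A(u_i,u_j)\}$; stop at $k=m$ and put $\mathcal{B}=\mathcal{B}_m$. $\mathcal{B}$ is a tree of height one if there is an $i$ with $i\in\{j,l\}$ for every $\{j,l\}\in\mathcal{B}$. $\mathcal{W}(\mathcal{B})$ is the set of $3$-element subsets of $\{1,\dots,n\}$ containing some $2$-element subset belonging to $\mathcal{B}$. $\Psi:U\otimes_F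 U\otimes_F U\to V\otimes_F U$ is the linear map with $\Psi(x\otimes y\otimes z)=A(x,y)\otimes z+A(y,z)\otimes x+A(z,x)\otimes y$. *)

(* Defs.v *)
From HB Require Import structures.
From mathcomp Require Import all_boot all_order all_algebra.
Set Implicit Arguments. Unset Strict Implicit. Unset Printing Implicit Defensive.
Import GRing.Theory.
Local Open Scope ring_scope.

Section Defs.
Variables (F : fieldType) (U V : vectType F) (n : nat).
Variables (A : U -> U -> V) (u : n.-tuple U).

(* index pairs {i,j} with i < j, represented as (i, j) *)
Definition pairY := ('I_n * 'I_n)%type.

(* the totally ordered set Y, listed in increasing order:
   first by max = j, then by the remaining element i *)
Definition Yseq : seq pairY :=
  flatten [seq map (fun i : 'I_n => ((i, j) : pairY)) (filter (fun i : 'I_n => (i < j)%N) (enum 'I_n)) | j : 'I_n <- enum 'I_n].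

Definition Aval (p : pairY) : V := A (u`_p.1) (u`_p.2).

(* B_{k+1} = B_k ∪ {least {i,j} in Y with A(u_i,u_j) ∉ span(B_k)};
   unchanged when no such element exists (the construction has stopped) *)
Definition stepB (Bk : seq pairY) : seq pairY :=
  match [seq p <- Yseq | Aval p \notin <<map Aval Bk>>%VS] with
  | p :: _ => rcons Bk p
  | [::] => Bk
  end.

(* iterate long enough (|Y| >= m steps) for the construction to stop *)
Definition calB : seq pairY := iter (size Yseq) stepB [::].

Definition tree_height_one (B : seq pairY) : Prop :=
  exists i : 'I_n, forall p, p \in B -> (i == p.1) || (i == p.2).

Definition calW (B : seq pairY) : {set {set 'I_n}} :=
  [set S : {set 'I_n} | (#|S| == 3)%N && has (fun p => [set p.1; p.2] \subset S) B].

(* V ⊗ U modelled as {ffun 'I_n -> V} via the basis u:  v ⊗ w |-> (k |-> coord_k(w) v) *)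
Definition tens (v : V) (w : U) : {ffun 'I_n -> V} :=
  [ffun k => coord u k w *: v].

Definition Psi_basis (a b c : 'I_n) : {ffun 'I_n -> V} :=
  tens (A u`_a u`_b) u`_c + tens (A u`_b u`_c) u`_a + tens (A u`_c u`_a) u`_b.

(* Im Psi = span of the images of the basis u_a ⊗ u_b ⊗ u_c of U ⊗ U ⊗ U *)
Definition ImPsi : {vspace {ffun 'I_n -> V}} :=
  <<[seq Psi_basis abc.1.1 abc.1.2 abc.2 | abc <- enum (@predT ('I_n * 'I_n * 'I_n)%type)]>>%VS.

End Defs.

(* Main.v *)
Require Import Defs.
From HB Require Import structures.
From mathcomp Require Import all_boot all_order all_algebra.
From mathcomp Require Import zify ring.
Set Implicit Arguments. Unset Strict Implicit. Unset Printing Implicit Defensive.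
Import GRing.Theory Num.Theory.

Definition Wset (n : nat) (D : {set 'I_n}) (E : seq {set 'I_n}) : {set {set 'I_n}} :=
  [set S : {set 'I_n} | [&& S \subset D, #|S| == 3 & has (fun f : {set 'I_n} => f \subset S) E]].

Definition meets (n : nat) (g : {set 'I_n}) := fun f : {set 'I_n} => f :&: g != set0.

Lemma card_bigcup_le (n : nat) (T : eqType) (E : seq T) (P : pred T) (h : T -> {set 'I_n}) :
  (forall f, f \in E -> P f -> #|h f| <= 1) ->
  #|\bigcup_(f <- E | P f) h f| <= count P E.
Proof.
elim: E => [|f E IH] hb; first by rewrite !big_nil cards0.
rewrite !big_cons /=; case Pf: (P f).
  apply: leq_trans (leq_card_setU _ _) _.
  idtac.
  apply: leq_add; first by apply: hb; rewrite ?inE ?eqxx.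
  by apply: IH => g gE; apply: hb; rewrite inE gE orbT.
by apply: IH => g gE; apply: hb; rewrite inE gE orbT.
Qed.

Lemma mem_bigcup_seq (n : nat) (T : eqType) (E : seq T) (P : pred T) (h : T -> {set 'I_n}) f x :
  f \in E -> P f -> x \in h f -> x \in \bigcup_(f <- E | P f) h f.
Proof.
elim: E => [|g E IH] //; rewrite inE big_cons => /orP[/eqP <-|fE] Pf xh.
  by rewrite Pf inE xh.
by case: (P g); rewrite ?inE IH ?orbT.
Qed.

Lemma step_card (n : nat) (D g : {set 'I_n}) (E : seq {set 'I_n}) :
  g \notin E -> #|g| = 2 -> g \subset D -> (forall f, f \in E -> #|f| = 2) ->
  #|Wset D E| + #|D| <= #|Wset D (g :: E)| + 2 + count (meets g) E.
Proof.
move=> gE cg gD cE.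
set A := D :\: g.
set Bp := [set c | has (fun f : {set 'I_n} => f \subset c |: g) E].
have hA : #|A| + 2 = #|D|.
  by rewrite /A cardsD (setIidPr gD) cg subnK // -cg subset_leq_card.
set C := A :\: Bp.
have hAC := cardsID Bp A.
have hX : #|A :&: Bp| <= count (meets g) E.
  apply: (@leq_trans (#|\bigcup_(f <- E | meets g f) (f :\: g)|)).
    apply: subset_leq_card; apply/subsetP => c.
    rewrite !inE => /andP[/andP[cg' cD] /hasP[f fE fsub]].
    have cf : c \in f.
      apply: contraNT gE => cf.
      have fg : f \subset g.
        apply/subsetP => x xf; move/subsetP: fsub => /(_ x xf); rewrite !inE.
        by case/orP => // /eqP xc; move: cf; rewrite -xc xf.
      have -> : g = f by apply/eqP; rewrite eq_sym eqEcard fg cg (cE f fE).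
      by [].
    apply: (mem_bigcup_seq fE); last by rewrite !inE cg' cf.
      rewrite /meets.
      have : #|f :\: g| <= 1.
        rewrite -(cards1 c); apply: subset_leq_card; apply/subsetP => x.
        rewrite !inE => /andP[xg xf]; move/subsetP: fsub => /(_ x xf); rewrite !inE.
        by case/orP => // xg'; rewrite xg' in xg.
      have := cardsID g f; rewrite (cE f fE) => h1 h2.
      have : 0 < #|f :&: g| by lia.
      by rewrite card_gt0.
  apply: card_bigcup_le => f fE; rewrite /meets -card_gt0 => hm.
  have := cardsID g f; rewrite (cE f fE); lia.
have hWsub : Wset D E \subset Wset D (g :: E).
  apply/subsetP => S; rewrite !inE /= => /and3P[-> -> ->]; by rewrite orbT.
have hT : #|Wset D E| + #|C| <= #|Wset D (g :: E)|.
  rewrite -(card_in_imset (f := fun c => c |: g)); last first.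
    move=> c1 c2; rewrite !inE => /andP[_ /andP[c1g _]] /andP[_ /andP[c2g _]] e.
    have : c1 \in c2 |: g by rewrite -e !inE eqxx.
    by rewrite !inE (negPf c1g) orbF => /eqP.
  rewrite -cardsUI.
  have -> : Wset D E :&: [set c |: g | c in C] = set0.
    apply/eqP; rewrite -subset0; apply/subsetP => S; rewrite !inE.
    case/andP => /and3P[_ _ hS] /imsetP[c]; rewrite !inE => /andP[hc _] eS.
    by move: hS hc; rewrite eS => ->.
  rewrite cards0 addn0; apply: subset_leq_card; rewrite subUset hWsub /=.
  apply/subsetP => S /imsetP[c]; rewrite !inE => /andP[_ /andP[cg' cD]] ->.
  rewrite /= subsetUr orTb andbT cardsU1 cg' cg eqxx andbT.
  by apply/subsetP => x; rewrite !inE => /orP[/eqP ->//|]; apply: (subsetP gD).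
move: hT hAC hX hA; rewrite /C; lia.
Qed.

Lemma weakW (n : nat) (D : {set 'I_n}) (E : seq {set 'I_n}) :
  uniq E -> (forall f, f \in E -> #|f| = 2 /\ f \subset D) ->
  (\sum_(k < size E) (#|D|%:Z - 2 - k%:Z) <= #|Wset D E|%:Z)%R.
Proof.
elim: E => [|g E IH] /=; first by rewrite big_ord0.
move=> /andP[gE uE] hE; have [cg gD] := hE g (mem_head _ _).
have hE' : forall f, f \in E -> #|f| = 2 /\ f \subset D.
  by move=> f fE; apply: hE; rewrite inE fE orbT.
have := step_card gE cg gD (fun f fE => (hE' f fE).1).
have := IH uE hE'; rewrite big_ord_recr /=.
have := count_size (meets g) E. move: (\sum_(k < size E) _)%R => s. lia. Qed.
Lemma matchW (n : nat) (D : {set 'I_n}) (E : seq {set 'I_n}) :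
  uniq E -> (forall f, f \in E -> #|f| = 2 /\ f \subset D) ->
  (forall v, count (fun f : {set 'I_n} => v \in f) E <= 1) ->
  ((size E)%:Z * (#|D|%:Z - 2) <= #|Wset D E|%:Z)%R.
Proof.
elim: E => [|g E IH] /=; first by rewrite mul0r.
move=> /andP[gE uE] hE hv; have [cg gD] := hE g (mem_head _ _).
have hE' : forall f, f \in E -> #|f| = 2 /\ f \subset D.
  by move=> f fE; apply: hE; rewrite inE fE orbT.
have hc : count (meets g) E = 0.
  apply/eqP; rewrite -leqn0 leqNgt -has_count; apply/hasP => [[f fE]].
  rewrite /meets => /set0Pn [v]; rewrite inE => /andP[vf vg].
  have hh : 0 < count (fun f : {set 'I_n} => v \in f) E.
    by rewrite -has_count; apply/hasP; exists f.
  have := hv v; rewrite /= vg add1n ltnS leqn0 => /eqP c0.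
  by rewrite c0 in hh.
have := step_card gE cg gD (fun f fE => (hE' f fE).1).
have : (forall v, count (fun f : {set 'I_n} => v \in f) E <= 1).
  by move=> v; apply: leq_trans (hv v); rewrite /= leq_addl.
move=> /(IH uE hE'); rewrite hc intS mulrDl mul1r; set w := #|Wset D E|. set w2 := #|Wset D (g :: E)|. set d := #|D|. lia.
Qed.

Definition edge (n : nat) (p : pairY n) : {set 'I_n} := [set p.1; p.2].

Lemma edge_inj (n : nat) (p q : pairY n) : p.1 < p.2 -> q.1 < q.2 -> edge p = edge q -> p = q.
Proof.
move=> hp hq e.
have h1 : p.1 \in edge q by rewrite -e !inE eqxx.
have h2 : p.2 \in edge q by rewrite -e !inE eqxx orbT.
have h3 : q.1 \in edge p by rewrite e !inE eqxx.
move: h1 h2 h3; rewrite !in_set2.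
case: p q hp hq {e} => [p1 p2] [q1 q2] /= hp hq.
move=> /orP[/eqP a1|/eqP a1] /orP[/eqP a2|/eqP a2] /orP[/eqP a3|/eqP a3];
  subst; (by []) || lia.
Qed.

Local Open Scope ring_scope.

Lemma sumS (c : int) (a : nat) :
  2 * \sum_(k < a) (c - k%:Z) = a%:Z * (2 * c - a%:Z + 1).
Proof.
elim: a => [|a IH]; first by rewrite big_ord0 mulr0 mul0r.
rewrite big_ord_recr /= mulrDr IH intS; ring.
Qed.

Lemma sum_shift (n m : nat) :
  \sum_(2 <= i < m.+2) (n%:Z - i%:Z) = \sum_(k < m) (n%:Z - 2 - k%:Z).
Proof.
rewrite !big_add1 /= big_mkord; apply: eq_bigr => i _.
rewrite !intS; lia.
Qed.

Lemma combW (n : nat) (B : seq (pairY n)) :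
  uniq B -> (forall p, p \in B -> (p.1 < p.2)%N) -> ~ tree_height_one B ->
  \sum_(2 <= i < (size B).+2) (n%:Z - i%:Z) + ((size B)%:Z - 2) <= #|calW B|%:Z.
Proof.
move=> uB hB hnot.
set E := map (@edge n) B.
have -> : calW B = Wset setT E.
  by apply/setP => S; rewrite !inE subsetT has_map.
have uE : uniq E.
  rewrite map_inj_in_uniq // => p q pB qB; apply: edge_inj; exact: hB.
have cE : forall (D : {set 'I_n}) (L : seq {set 'I_n}), {subset L <= E} ->
    (forall f, f \in L -> forall v, v \in f -> v \in D) ->
    forall f, f \in L -> #|f| = 2%N /\ f \subset D.
  move=> D L LE hD f fL; split; first last.
    by apply/subsetP => v; apply: hD.
  have fE := LE f fL.
  case/mapP: fE => p pB ->; rewrite /edge cards2.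
  by have := hB p pB; case: eqP => // ->; rewrite ltnn.
have sE : size E = size B by rewrite size_map.
rewrite sum_shift -sE.
have h2 := sumS (n%:Z - 2) (size E).
case: (boolP [exists v, 1 < count (fun f : {set 'I_n} => v \in f) E]%N).
  case/existsP => v hv.
  set Es := filter (fun f : {set 'I_n} => v \in f) E.
  set Er := filter (fun f : {set 'I_n} => v \notin f) E.
  have hEr : has (fun f : {set 'I_n} => v \notin f) E.
    apply/idPn => /hasPn h; apply: hnot; exists v => p pB.
    by have := h (edge p) (map_f _ pB); rewrite negbK !inE.
  have sEs : size Es = count (fun f : {set 'I_n} => v \in f) E by rewrite size_filter.
  have sEr : size Er = count (fun f : {set 'I_n} => v \notin f) E by rewrite size_filter.
  have sEE : (size Es + size Er)%N = size E by rewrite sEs sEr count_predC.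
  have r1 : (0 < size Er)%N by rewrite sEr -has_count.
  have d2 : (1 < size Es)%N by rewrite sEs.
  have hs : Wset setT Es :|: Wset (~: [set v]) Er \subset Wset setT E.
    apply/subsetP => S; rewrite !inE => /orP[|] /and3P[_ -> /hasP[f]];
      rewrite mem_filter => /andP[_ fE] fS; rewrite subsetT /=;
      by apply/hasP; exists f.
  have hI : Wset setT Es :&: Wset (~: [set v]) Er = set0.
    apply/eqP; rewrite -subset0; apply/subsetP => S; rewrite !inE.
    case/andP => /and3P[_ _ /hasP[f]]; rewrite mem_filter => /andP[vf _] fS.
    case/and3P => /subsetP /(_ v) h _ _.
    by move: (h (subsetP fS v vf)); rewrite !inE eqxx.
  have hc := subset_leq_card hs; have := cardsUI (Wset setT Es) (Wset (~: [set v]) Er).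
  rewrite hI cards0 addn0 => hU.
  have w1 := weakW (filter_uniq _ uE)
    (cE setT Es (mem_subseq (filter_subseq _ _))
       (fun _ _ _ _ => in_setT _)).
  have w2 : forall f, f \in Er -> forall x, x \in f -> x \in ~: [set v].
    move=> f; rewrite mem_filter => /andP[vf _] x xf; rewrite !inE.
    by apply: contraNneq vf => <-.
  have w3 := weakW (filter_uniq _ uE)
    (cE _ Er (mem_subseq (filter_subseq _ _)) w2).
  rewrite cardsT card_ord in w1; rewrite cardsC1 card_ord in w3.
  have hn := ltn_ord v.
  have h3 := sumS (n%:Z - 2) (size Es).
  have h4 := sumS ((n.-1)%:Z - 2) (size Er).
  have hint : 0 <= ((size Er)%:Z - 1) * ((size Es)%:Z - 2).
    by apply: mulr_ge0; rewrite subr_ge0 lez_nat.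
  move: (\sum_(k < size E) _) h2 => s0 h2.
  move: (\sum_(k < size Es) _) h3 w1 => s1 h3 w1.
  move: (\sum_(k < size Er) _) h4 w3 => s2 h4 w3.
  rewrite -sEE.
  set a := #|Wset setT Es| in hU w1 *; set b := #|Wset [set~ v] Er| in hU w3 *.
  set c := #|Wset setT E| in hc *.
  rewrite -sEE in h2; move: hint h2 h3 h4 w1 w3 hU hc.
  move: (size Es) (size Er) => x y.
  have e1 : (n.-1)%:Z = n%:Z - 1.
    by rewrite -[in RHS](ltn_predK hn) intS; ring.
  rewrite e1 PoszD => hint h2 h3 h4 w1 w3 hU hc.
  have key : s1 + s2 - s0 = x%:Z * y%:Z - y%:Z.
    suff : 2 * (s1 + s2 - s0) = 2 * (x%:Z * y%:Z - y%:Z) by lia.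
    rewrite mulrBr mulrDr h2 h3 h4; ring.
  have : (y%:Z - 1) * (x%:Z - 2) = x%:Z * y%:Z - 2 * y%:Z - x%:Z + 2 by ring.
  move: hU hc; set u := #|_|; lia.
move/existsPn => hv.
have hv' : forall v, (count (fun f : {set 'I_n} => v \in f) E <= 1)%N.
  by move=> v; rewrite leqNgt; apply: hv.
have := matchW uE (cE setT E (fun f fE => fE) (fun _ _ _ _ => in_setT _)) hv'.
rewrite cardsT card_ord.
have hint : 0 <= ((size E)%:Z - 1) * ((size E)%:Z - 2).
  by case: (size E) => [|[|m]].
move: (\sum_(k < size E) _) h2 => s0 h2.
move: hint h2; move: (size E) => m; set c := #|_|.
move=> hint h2 h3.
have : ((m%:Z - 1) * (m%:Z - 2)) = m%:Z * m%:Z - 3 * m%:Z + 2 by ring.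
have : m%:Z * (n%:Z - 2) = m%:Z * n%:Z - 2 * m%:Z by ring.
have : m%:Z * (2 * (n%:Z - 2) - m%:Z + 1) = 2 * m%:Z * n%:Z - 3 * m%:Z - m%:Z * m%:Z by ring.
lia.
Qed.

Definition blk (n : nat) (j : 'I_n) : seq (pairY n) :=
  map (fun i : 'I_n => ((i, j) : pairY n)) (filter (fun i : 'I_n => (i < j)%N) (enum 'I_n)).

Lemma YseqE (n : nat) : Yseq n = flatten (map (@blk n) (enum 'I_n)).
Proof. by []. Qed.

Lemma mem_Yseq (n : nat) (p : pairY n) : (p \in Yseq n) = (p.1 < p.2)%N.
Proof.
rewrite YseqE; apply/flattenP/idP.
  case=> s /mapP[j _ ->] /mapP[i]; rewrite mem_filter => /andP[hij _] -> //.
move=> h; exists (blk p.2); first by apply: map_f; rewrite mem_enum.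
case: p h => [i j] /= h; apply/mapP; exists i => //.
by rewrite mem_filter h mem_enum.
Qed.

Definition rkp (n : nat) (p : pairY n) : nat := (2 ^ p.1 + 2 ^ p.2)%N.

Lemma pairwise_flatten_map (T S : Type) (r : rel T) (f : S -> seq T) (s : seq S) :
  (forall j, List.In j s -> pairwise r (f j)) ->
  pairwise (fun j j' => allrel r (f j) (f j')) s ->
  pairwise r (flatten (map f s)).
Proof.
elim: s => [|j s IH] //= hb /andP[hall hp].
have h1 := hb j (or_introl erefl).
have h2 : pairwise r (flatten (map f s)).
  by apply: IH => // k hk; apply: hb; right.
rewrite pairwise_cat h1 h2 !andbT.
elim: s {IH hb hp h2} hall => [|k s IH] /=; first by rewrite allrel0r.
by case/andP => g1 g2; rewrite allrel_catr g1 IH.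
Qed.

Lemma enum_ord_pairwise (n : nat) : pairwise (fun i j : 'I_n => (i < j)%N) (enum 'I_n).
Proof.
have := iota_ltn_sorted 0 n; rewrite -val_enum_ord sorted_map.
rewrite sorted_pairwise //; move=> a b c; exact: ltn_trans.
Qed.

Lemma Yseq_pairwise (n : nat) : pairwise (fun p q => (rkp p < rkp q)%N) (Yseq n).
Proof.
rewrite YseqE; apply: pairwise_flatten_map.
  move=> j _; rewrite /blk pairwise_map; apply: pairwise_filter.
  apply: sub_pairwise (enum_ord_pairwise n) => a b /= hab.
  by rewrite /rkp /= ltn_add2r ltn_exp2l.
apply: sub_pairwise (enum_ord_pairwise n) => j j' hjj'.
apply/allrelP => p q /mapP[i]; rewrite mem_filter => /andP[hij _] ->.
case/mapP => i'; rewrite mem_filter => /andP[hij' _] -> /=.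
rewrite /rkp /=.
have e1 : (2 ^ i < 2 ^ j)%N by rewrite ltn_exp2l.
have e2 : (2 ^ j.+1 <= 2 ^ j')%N by rewrite leq_exp2l.
rewrite expnS in e2.
have e3 : (0 < 2 ^ i')%N by rewrite expn_gt0.
lia.
Qed.

Lemma Yseq_index_rk (n : nat) (p q : pairY n) : p \in Yseq n -> q \in Yseq n ->
  (index p (Yseq n) <= index q (Yseq n))%N -> p = q \/ (rkp p < rkp q)%N.
Proof.
move=> pY qY; rewrite leq_eqVlt => /orP[/eqP e|lt].
  by left; rewrite -(nth_index p pY) e nth_index.
right; have := Yseq_pairwise n.
rewrite -sorted_pairwise; last by move=> a b c; exact: ltn_trans.
move=> /sorted_ltn_index h; apply: h => //; move=> a b c; exact: ltn_trans.
Qed.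

Lemma filter_head (T : eqType) (P : pred T) (s t : seq T) (p0 : T) :
  filter P s = p0 :: t ->
  [/\ p0 \in s, P p0 & forall p, p \in s -> (index p s < index p0 s)%N -> ~~ P p].
Proof.
elim: s => [|x s IH] //; rewrite /=.
case Px: (P x).
  case=> <- _; by split; rewrite ?mem_head // => p _; rewrite /= eqxx.
move=> /IH [h1 h2 h3]; split; rewrite ?inE ?h1 ?orbT //.
have xp0 : (x == p0) = false by apply/negbTE; apply: contraFneq Px => ->.
move=> p; rewrite inE => /orP[/eqP ->|ps]; first by rewrite Px.
rewrite /= xp0; case: (x =P p) => [<-|_]; first by rewrite Px.
by rewrite ltnS; apply: h3.
Qed.

Definition idx (n : nat) (p : pairY n) := index p (Yseq n).

Definition InvB (F : fieldType) (U V : vectType F) (n : nat) (A : U -> U -> V) (u : n.-tuple U)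
   (Bk : seq (pairY n)) : Prop :=
  [/\ {subset Bk <= Yseq n}, free (map (Aval A u) Bk),
      (forall p, p \in Yseq n -> Aval A u p \in <<map (Aval A u) Bk>>%VS ->
         Aval A u p \in <<map (Aval A u) [seq q <- Bk | (idx q <= idx p)%N]>>%VS) &
      (forall q, q \in Bk -> forall p, p \in Yseq n -> (idx p <= idx q)%N ->
         Aval A u p \in <<map (Aval A u) Bk>>%VS)].

Definition stoppedB (F : fieldType) (U V : vectType F) (n : nat) (A : U -> U -> V) (u : n.-tuple U)
   (Bk : seq (pairY n)) : Prop :=
  forall p, p \in Yseq n -> Aval A u p \in <<map (Aval A u) Bk>>%VS.

Lemma InvB_step (F : fieldType) (U V : vectType F) (n : nat) (A : U -> U -> V) (u : n.-tuple U)
   (Bk : seq (pairY n)) : InvB A u Bk ->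
  InvB A u (stepB A u Bk) /\
  ((stoppedB A u Bk /\ stepB A u Bk = Bk) \/ size (stepB A u Bk) = (size Bk).+1).
Proof.
case=> [hY hfree hc hd].
rewrite /stepB; case E: [seq p <- Yseq n | _] => [|p0 t].
  split; first by split.
  left; split => // p pY; apply/negPn/negP => hn.
  have : p \in [seq p <- Yseq n | Aval A u p \notin <<map (Aval A u) Bk>>%VS].
    by rewrite mem_filter hn.
  by rewrite E.
have [p0Y p0n hbefore] := filter_head E.
set Bk' := rcons Bk p0.
have sub : (<<map (Aval A u) Bk>> <= <<map (Aval A u) Bk'>>)%VS.
  by apply: sub_span => x; rewrite /Bk' map_rcons mem_rcons inE => ->; rewrite orbT.
have hlt : forall q, q \in Bk -> (idx q < idx p0)%N.
  move=> q qB; rewrite ltnNge; apply/negP => h.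
  by move: p0n; rewrite (hd q qB p0 p0Y h).
have hprev : forall p, p \in Yseq n -> (idx p < idx p0)%N ->
    Aval A u p \in <<map (Aval A u) Bk>>%VS.
  by move=> p pY h; move: (hbefore p pY h); rewrite negbK.
split; last by right; rewrite size_rcons.
split.
- by move=> q; rewrite mem_rcons inE => /orP[/eqP ->|/hY].
- have hp : perm_eq (rcons Bk p0) (p0 :: Bk) by rewrite perm_rcons perm_refl.
  by rewrite (perm_free (perm_map (Aval A u) hp)) /= free_cons p0n hfree.
- move=> p pY hp; case: (ltnP (idx p) (idx p0)) => h.
    rewrite filter_rcons leqNgt h /=.
    by apply: hc => //; apply: hprev.
  have -> : [seq q <- Bk' | (idx q <= idx p)%N] = Bk' => //.
  apply/all_filterP/allP => q; rewrite mem_rcons inE => /orP[/eqP ->//|qB].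
  by apply: ltnW; apply: leq_trans (hlt q qB) h.
- move=> q; rewrite mem_rcons inE => /orP[/eqP ->|qB] p pY h.
    case: (ltnP (idx p) (idx p0)) => h'; first by apply: (subvP sub); apply: hprev.
    have -> : p = p0.
      have e : idx p = idx p0 by apply/eqP; rewrite eqn_leq h h'.
      by rewrite -(nth_index p pY) -(nth_index p p0Y); congr nth.
    by apply: memv_span; rewrite /Bk' map_rcons mem_rcons mem_head.
  by apply: (subvP sub); apply: (hd q qB p pY h).
Qed.

Lemma stopped_step (F : fieldType) (U V : vectType F) (n : nat) (A : U -> U -> V) (u : n.-tuple U)
   (Bk : seq (pairY n)) : stoppedB A u Bk -> stepB A u Bk = Bk.
Proof.
move=> hst; rewrite /stepB.
have : ~~ has (fun p => Aval A u p \notin <<map (Aval A u) Bk>>%VS) (Yseq n).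
  by apply/hasPn => p pY; rewrite negbK; exact: hst p pY.
by rewrite has_filter negbK => /eqP ->.
Qed.

Lemma InvB_iter (F : fieldType) (U V : vectType F) (n : nat) (A : U -> U -> V) (u : n.-tuple U) k :
  InvB A u (iter k (stepB A u) [::]) /\
  (stoppedB A u (iter k (stepB A u) [::]) \/ size (iter k (stepB A u) [::]) = k).
Proof.
elim: k => [|k [hI hs]] /=.
  split; last by right.
  split => //; first exact: nil_free.
have [hI' hs'] := InvB_step hI; split => //.
case: hs' => [[hst ->]|hsz]; first by left.
case: hs => [st|hk]; last by right; rewrite hsz hk.
by left; rewrite stopped_step.
Qed.

Lemma calB_props (F : fieldType) (U V : vectType F) (n : nat) (A : U -> U -> V) (u : n.-tuple U) :
  InvB A u (calB A u) /\ stoppedB A u (calB A u).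
Proof.
have [hI hs] := InvB_iter A u (size (Yseq n)).
rewrite /calB; split => //; case: hs => // hsz.
case: hI => hY hfree _ _.
have uB : uniq (iter (size (Yseq n)) (stepB A u) [::]).
  exact: map_uniq (free_uniq hfree).
have [_ eqB] := uniq_min_size uB hY (eq_leq (esym hsz)).
move=> p pY; apply: memv_span; apply: map_f; by rewrite eqB.
Qed.

Lemma lin_closure (F : fieldType) (U V : vectType F) (f : U -> V) (hf : linear f)
   (X : seq U) (W : {vspace V}) :
  (forall x, x \in X -> f x \in W) -> forall x, x \in <<X>>%VS -> f x \in W.
Proof.
move=> hX x hx; rewrite (coord_span (X := in_tuple X) hx).
have f0 : f 0 = 0.
  have := congr1 (fun z => z - f 0) (hf 1 0 0).
  by rewrite scaler0 addr0 scale1r subrr addrK.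
apply: (big_ind (fun w => f w \in W)).
- by rewrite f0 mem0v.
- by move=> a b ha hb; have := hf 1 a b; rewrite !scale1r => ->; apply: memvD.
- move=> i _; have := hf (coord (in_tuple X) i x) (X`_i) 0.
  rewrite !addr0 f0 addr0 => ->; apply: memvZ; apply: hX.
  by apply: mem_nth; rewrite /= (ltn_ord i).
Qed.

Lemma lin_van (F : fieldType) (W : vectType F) (phi : W -> F)
   (hphi : forall a x y, phi (a *: x + y) = a * phi x + phi y) (X : seq W) :
  (forall x, x \in X -> phi x = 0) -> forall v, v \in <<X>>%VS -> phi v = 0.
Proof.
move=> hX v hv; rewrite (coord_span (X := in_tuple X) hv).
have f0 : phi 0 = 0.
  have := congr1 (fun z => z - phi 0) (hphi 1 0 0).
  by rewrite scaler0 addr0 mul1r subrr addrK.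
apply: (big_ind (fun w => phi w = 0)).
- exact: f0.
- by move=> a b ha hb; have := hphi 1 a b; rewrite scale1r mul1r ha hb addr0.
- move=> i _; have := hphi (coord (in_tuple X) i v) (X`_i) 0.
  rewrite !addr0 f0 addr0 => ->; rewrite hX ?mulr0 //.
  by apply: mem_nth; rewrite /= (ltn_ord i).
Qed.

Lemma A_anti (F : fieldType) (U V : vectType F) (A : U -> U -> V)
  (hAl : forall y : U, linear (A ^~ y)) (hAr : forall x : U, linear (A x))
  (hAalt : forall x : U, A x x = 0) x y : A y x = - A x y.
Proof.
have addl : forall a b c, A (a + b) c = A a c + A b c.
  by move=> a b c; have := hAl c 1 a b; rewrite !scale1r.
have addR : forall a b c, A c (a + b) = A c a + A c b.
  by move=> a b c; have := hAr c 1 a b; rewrite !scale1r.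
have := hAalt (x + y); rewrite addl !addR !hAalt add0r addr0 addrC => /eqP.
by rewrite addr_eq0 => /eqP.
Qed.

Lemma span_calB (F : fieldType) (U V : vectType F) (n : nat)
  (A : U -> U -> V) (u : n.-tuple U)
  (hAl : forall y : U, linear (A ^~ y))
  (hAr : forall x : U, linear (A x))
  (hAalt : forall x : U, A x x = 0)
  (hspan : forall W : {vspace V}, (forall x y : U, A x y \in W) -> W = fullv)
  (hbasis : basis_of fullv u) :
  <<map (Aval A u) (calB A u)>>%VS = fullv /\ \dim (fullv : {vspace V}) = size (calB A u).
Proof.
have [[hY hfree hc hd] hst] := calB_props A u.
set W := <<map (Aval A u) (calB A u)>>%VS.
have hu : <<u>>%VS = fullv by case/andP: hbasis => /eqP.
have hij : forall i j : 'I_n, A u`_i u`_j \in W.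
  move=> i j; case: (ltngtP i j) => h.
  - have := hst ((i, j) : pairY n); rewrite mem_Yseq => /(_ h); by [].
  - rewrite A_anti // memvN.
    have := hst ((j, i) : pairY n); rewrite mem_Yseq => /(_ h); by [].
  - have -> : i = j by apply: val_inj.
    by rewrite hAalt mem0v.
have hiy : forall (i : 'I_n) y, A u`_i y \in W.
  move=> i y; apply: (lin_closure (hAr _) (X := u)); last by rewrite hu memvf.
  by move=> x /tnthP [j ->]; rewrite (tnth_nth 0); apply: hij.
have hW : W = fullv.
  apply: hspan => x y; apply: (lin_closure (hAl y) (X := u)); last by rewrite hu memvf.
  by move=> z /tnthP [j ->]; rewrite (tnth_nth 0); apply: hiy.
split => //; rewrite -hW; move/eqP: hfree => ->; exact: size_map.
Qed.

Definition rk (n : nat) (S : {set 'I_n}) : nat := (\sum_(x in S) 2 ^ x)%N.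

Lemma rkU1 (n : nat) (x : 'I_n) (S : {set 'I_n}) : x \notin S -> rk (x |: S) = (2 ^ x + rk S)%N.
Proof. by move=> h; rewrite /rk big_setU1. Qed.

Lemma rk2 (n : nat) (x y : 'I_n) : x != y -> rk [set x; y] = (2 ^ x + 2 ^ y)%N.
Proof. by move=> h; rewrite rkU1 ?inE // /rk big_set1. Qed.

Lemma tens_comp (F : fieldType) (U V : vectType F) (n : nat) (u : n.-tuple U)
  (hu : free u) (v : V) (c k : 'I_n) : (tens u v u`_c) k = (c == k)%:R *: v.
Proof. by rewrite /tens ffunE coord_free. Qed.

Lemma Psi_comp (F : fieldType) (U V : vectType F) (n : nat) (A : U -> U -> V) (u : n.-tuple U)
  (hu : free u) (a b c k : 'I_n) :
  (Psi_basis A u a b c) k = (c == k)%:R *: A u`_a u`_b + (a == k)%:R *: A u`_b u`_c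
     + (b == k)%:R *: A u`_c u`_a.
Proof. by rewrite /Psi_basis /tens !ffunE !coord_free. Qed.


Lemma coord_Aval (F : fieldType) (U V : vectType F) (n : nat) (A : U -> U -> V) (u : n.-tuple U)
  (B : seq (pairY n)) (hfree : free (map (Aval A u) B)) (e : pairY n) (he : e \in B)
  (i : 'I_(size (map (Aval A u) B))) (hi : val i = index e B) (r : pairY n) (hr : r \in B) :
  coord (in_tuple (map (Aval A u) B)) i (Aval A u r) = (r == e)%:R.
Proof.
have hr' : (index r B < size (map (Aval A u) B))%N by rewrite size_map index_mem.
have -> : Aval A u r = (in_tuple (map (Aval A u) B))`_(Ordinal hr').
  by rewrite /= (nth_map r) ?nth_index // -(size_map (Aval A u)).
rewrite coord_free //; suff -> : (Ordinal hr' == i) = (r == e) by [].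
apply/idP/idP.
  move=> /eqP /(congr1 val) /= h; apply/eqP.
  by rewrite -(nth_index r hr) h hi nth_index.
by move=> /eqP er; apply/eqP; apply: val_inj; rewrite /= hi er.
Qed.

Lemma coord_Yseq (F : fieldType) (U V : vectType F) (n : nat) (A : U -> U -> V) (u : n.-tuple U)
  (B : seq (pairY n)) (hfree : free (map (Aval A u) B))
  (hc : forall p, p \in Yseq n ->
         Aval A u p \in <<map (Aval A u) [seq q <- B | (idx q <= idx p)%N]>>%VS)
  (e : pairY n) (he : e \in B)
  (i : 'I_(size (map (Aval A u) B))) (hi : val i = index e B) (p : pairY n) (hp : p \in Yseq n) :
  coord (in_tuple (map (Aval A u) B)) i (Aval A u p) != 0 -> (idx e <= idx p)%N.
Proof.
apply: contraR; rewrite -ltnNge => hlt; apply/eqP.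
apply: (lin_van _ _ (hc p hp)).
  by move=> a x y; rewrite linearD linearZ.
move=> x /mapP[q]; rewrite mem_filter => /andP[hq qB] ->.
rewrite (coord_Aval hfree he hi qB).
case: eqP => // eqe; move: hq; rewrite eqe leqNgt hlt //.
Qed.

Lemma coord_pair (F : fieldType) (U V : vectType F) (n : nat) (A : U -> U -> V) (u : n.-tuple U)
  (hanti : forall x y, A y x = - A x y)
  (B : seq (pairY n)) (hY : {subset B <= Yseq n}) (hfree : free (map (Aval A u) B))
  (hc : forall p, p \in Yseq n ->
         Aval A u p \in <<map (Aval A u) [seq q <- B | (idx q <= idx p)%N]>>%VS)
  (e : pairY n) (he : e \in B)
  (i : 'I_(size (map (Aval A u) B))) (hi : val i = index e B) (x y : 'I_n) (hxy : x != y) :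
  coord (in_tuple (map (Aval A u) B)) i (A u`_x u`_y) != 0 ->
  edge e = [set x; y] \/ (rkp e < 2 ^ x + 2 ^ y)%N.
Proof.
case: (ltngtP x y) => h; last by move: hxy; rewrite (val_inj h) eqxx.
- have hp : ((x, y) : pairY n) \in Yseq n by rewrite mem_Yseq.
  move=> hnz; have := coord_Yseq hfree hc he hi hp hnz.
  by case/(Yseq_index_rk (hY e he) hp) => [->|]; [left|right].
- have hp : ((y, x) : pairY n) \in Yseq n by rewrite mem_Yseq.
  rewrite hanti raddfN oppr_eq0 => hnz; have := coord_Yseq hfree hc he hi hp hnz.
  case/(Yseq_index_rk (hY e he) hp) => [->|]; [left|right].
    by rewrite /edge /= setUC.
  by rewrite addnC.
Qed.

Lemma arith1 r a b c : (r < b + c -> a + r < c + (a + b))%N.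
Proof. lia. Qed.
Lemma arith2 r a b c : (r < c + a -> b + r < c + (a + b))%N.
Proof. lia. Qed.

Lemma key_lemma (F : fieldType) (U V : vectType F) (n : nat) (A : U -> U -> V) (u : n.-tuple U)
  (hu : free u) (hanti : forall x y, A y x = - A x y)
  (B : seq (pairY n)) (hY : {subset B <= Yseq n}) (hfree : free (map (Aval A u) B))
  (hc : forall p, p \in Yseq n ->
         Aval A u p \in <<map (Aval A u) [seq q <- B | (idx q <= idx p)%N]>>%VS)
  (e : pairY n) (he : e \in B) (k : 'I_n) (hk : k \notin edge e)
  (i : 'I_(size (map (Aval A u) B))) (hi : val i = index e B)
  (e' : pairY n) (he' : e' \in B) (k' : 'I_n) (hk' : k' \notin edge e') :
  coord (in_tuple (map (Aval A u) B)) i ((Psi_basis A u e'.1 e'.2 k') k) != 0 ->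
  k |: edge e = k' |: edge e' \/ (rk (k |: edge e) < rk (k' |: edge e'))%N.
Proof.
have lt' : (e'.1 < e'.2)%N by rewrite -mem_Yseq; apply: hY.
have lt : (e.1 < e.2)%N by rewrite -mem_Yseq; apply: hY.
have ne12 : e'.1 != e'.2 by rewrite neq_ltn lt'.
have ne : e.1 != e.2 by rewrite neq_ltn lt.
have [hk1 hk2] : k' != e'.1 /\ k' != e'.2.
  by move: hk'; rewrite /edge !inE negb_or => /andP[].
have rke : rk (k |: edge e) = (2 ^ k + rkp e)%N by rewrite rkU1 // rk2.
have rke' : rk (k' |: edge e') = (2 ^ k' + (2 ^ e'.1 + 2 ^ e'.2))%N by rewrite rkU1 // rk2.
rewrite Psi_comp //.
have GL := coord_pair hanti hY hfree hc he hi.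
case: (eqVneq k' k) => [ekk|nkk].
  rewrite ekk in hk1 hk2 rke' *.
  rewrite (eq_sym e'.1) (negbTE hk1) (eq_sym e'.2) (negbTE hk2) !scaler_nat /= mulr1n !mulr0n !addr0.
  case/(GL _ _ ne12) => h; first by left; rewrite h.
  by right; rewrite rke rke' ltn_add2l.
case: (eqVneq e'.1 k) => [e1k|n1k].
  have n2k : (e'.2 == k) = false by rewrite -e1k eq_sym (negbTE ne12).
  rewrite ?n2k !scaler_nat /= mulr1n !mulr0n add0r addr0.
  have hne : e'.2 != k' by rewrite eq_sym.
  case/(GL _ _ hne) => h.
    left; rewrite h -e1k; apply/setP => z; rewrite !inE.
    by case: (z == e'.1); case: (z == e'.2); case: (z == k').
  right; rewrite rke rke' -e1k; move: h.
  move: (rkp e) (2 ^ e'.1)%N (2 ^ e'.2)%N (2 ^ k')%N => r a b c; exact: arith1.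
case: (eqVneq e'.2 k) => [e2k|n2k].
  rewrite !scaler_nat /= mulr1n !mulr0n !add0r.
  case/(GL _ _ hk1) => h.
    left; rewrite h -e2k; apply/setP => z; rewrite !inE.
    by case: (z == e'.1); case: (z == e'.2); case: (z == k').
  right; rewrite rke rke' -e2k; move: h.
  move: (rkp e) (2 ^ e'.1)%N (2 ^ e'.2)%N (2 ^ k')%N => r a b c; exact: arith2.
by rewrite !scaler_nat /= !mulr0n !addr0 linear0 eqxx.
Qed.

Definition tri (n : nat) (ek : pairY n * 'I_n) : {set 'I_n} := ek.2 |: edge ek.1.
Definition psiv (F : fieldType) (U V : vectType F) (n : nat) (A : U -> U -> V) (u : n.-tuple U)
  (ek : pairY n * 'I_n) : {ffun 'I_n -> V} := Psi_basis A u ek.1.1 ek.1.2 ek.2.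

Lemma psi_free (F : fieldType) (U V : vectType F) (n : nat) (A : U -> U -> V) (u : n.-tuple U)
  (hu : free u) (hanti : forall x y, A y x = - A x y)
  (B : seq (pairY n)) (hY : {subset B <= Yseq n}) (hfree : free (map (Aval A u) B))
  (hc : forall p, p \in Yseq n ->
         Aval A u p \in <<map (Aval A u) [seq q <- B | (idx q <= idx p)%N]>>%VS)
  (L : seq (pairY n * 'I_n)) :
  (forall ek, ek \in L -> ek.1 \in B /\ ek.2 \notin edge ek.1) ->
  uniq (map (@tri n) L) ->
  sorted (fun a b => rk (tri b) <= rk (tri a))%N L ->
  free (map (psiv A u) L).
Proof.
have rtr : transitive (fun a b : pairY n * 'I_n => rk (tri b) <= rk (tri a))%N.
  by move=> b a c h1 h2; apply: leq_trans h2 h1.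
elim: L => [|[e k] L IH] hv huq hs; first exact: nil_free.
rewrite /= free_cons; apply/andP; split; last first.
  apply: IH.
  - by move=> ek hek; apply: hv; rewrite inE hek orbT.
  - by case/andP: huq.
  - exact: path_sorted hs.
have [he hk] := hv (e, k) (mem_head _ _).
have hlt : (index e B < size (map (Aval A u) B))%N by rewrite size_map index_mem.
set i := Ordinal hlt.
have hi : val i = index e B by [].
pose phi := fun f : {ffun 'I_n -> V} => coord (in_tuple (map (Aval A u) B)) i (f k).
have hphi : forall a x y, phi (a *: x + y) = a * phi x + phi y.
  by move=> a x y; rewrite /phi !ffunE linearD linearZ.
apply/negP => hin.
have h1 : phi (psiv A u (e, k)) = 1.
  rewrite /phi /psiv /= Psi_comp // eqxx.
  have [n1 n2] : (e.1 == k) = false /\ (e.2 == k) = false.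
    by move: hk; rewrite /edge !inE negb_or => /andP[a b]; rewrite !(eq_sym _ k) (negbTE a) (negbTE b).
  rewrite n1 n2 !scaler_nat /= mulr1n !mulr0n !addr0.
  by rewrite (coord_Aval hfree he hi he) eqxx.
suff H0 : phi (psiv A u (e, k)) = 0 by move: (oner_neq0 F); rewrite -h1 H0 eqxx.
apply: (lin_van hphi _ hin).
move=> x /mapP [[e' k'] hL ->].
have hL' : (e', k') \in (e, k) :: L by rewrite inE hL orbT.
have [he' hk'] := hv (e', k') hL'.
apply/eqP; apply/negP => /negP hnz.
have := key_lemma hu hanti hY hfree hc he hk hi he' hk' hnz.
have hall := order_path_min rtr hs.
move/allP: hall => /(_ _ hL) /= hle.
case=> [eq|lt].
  move: huq; rewrite /= => /andP[/negP hn _]; apply: hn.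
  by apply/mapP; exists (e', k').
by move: hle; rewrite /tri /= leqNgt lt.
Qed.

Lemma dim_ImPsi (F : fieldType) (U V : vectType F) (n : nat) (A : U -> U -> V) (u : n.-tuple U)
  (hu : free u) (hanti : forall x y, A y x = - A x y)
  (B : seq (pairY n)) (hY : {subset B <= Yseq n}) (hfree : free (map (Aval A u) B))
  (hc : forall p, p \in Yseq n ->
         Aval A u p \in <<map (Aval A u) [seq q <- B | (idx q <= idx p)%N]>>%VS) :
  (#|calW B| <= \dim (ImPsi A u))%N.
Proof.
case: (posnP #|calW B|) => [->|hpos] //.
have /card_gt0P [S0 hS0] := hpos.
move: hS0; rewrite inE => /andP[_ /hasP [p0 _ _]].
pose x0 : pairY n * 'I_n := (p0, p0.1).
pose keyf (S : {set 'I_n}) : pairY n * 'I_n :=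
  let p := nth x0.1 B (find (fun p : pairY n => edge p \subset S) B) in
  (p, odflt x0.2 [pick k in S :\: edge p]).
have hkey : forall S, S \in calW B ->
    [/\ (keyf S).1 \in B, (keyf S).2 \notin edge (keyf S).1 & tri (keyf S) = S].
  move=> S; rewrite inE => /andP[/eqP c3 hh].
  have hh' : has (fun p : pairY n => edge p \subset S) B by [].
  set p := nth x0.1 B (find (fun p : pairY n => edge p \subset S) B).
  have pB : p \in B by apply: mem_nth; rewrite -has_find.
  have pS : edge p \subset S by apply: (nth_find x0.1 hh').
  have c2 : #|edge p| = 2%N.
    have := hY p pB; rewrite mem_Yseq /edge cards2 => h.
    by rewrite neq_ltn h.
  have c1 : #|S :\: edge p| = 1%N by rewrite cardsD (setIidPr pS) c3 c2.
  have [k hk] : exists k, k \in S :\: edge p.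
    by apply/set0Pn; rewrite -card_gt0 c1.
  rewrite /keyf -/p /=.
  case: pickP => [k' hk'|/(_ k)]; last by rewrite hk.
  move: hk'; rewrite in_setD => /andP[k'e k'S]; split => //.
  apply/eqP; rewrite /tri /= eqEcard; apply/andP; split.
    by apply/subsetP => z; rewrite in_setU1 => /orP[/eqP ->//|]; apply: (subsetP pS).
  by rewrite cardsU1 k'e c2 c3.
pose r := (fun a b : pairY n * 'I_n => rk (tri b) <= rk (tri a))%N.
set L := sort r (map keyf (enum (calW B))).
have pL : perm_eq L (map keyf (enum (calW B))) by rewrite perm_sort perm_refl.
have hv : forall ek, ek \in L -> ek.1 \in B /\ ek.2 \notin edge ek.1.
  move=> ek; rewrite (perm_mem pL) => /mapP [S]; rewrite mem_enum => hS ->.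
  by have [? ? _] := hkey S hS.
have huq : uniq (map (@tri n) L).
  rewrite (perm_uniq (perm_map _ pL)) -map_comp.
  have -> : map (@tri n \o keyf) (enum (calW B)) = enum (calW B).
    rewrite -[RHS]map_id; apply/eq_in_map => S; rewrite mem_enum => hS /=.
    by have [_ _ ->] := hkey S hS.
  exact: enum_uniq.
have hs : sorted r L.
  by apply: sort_sorted => a b; rewrite /r leq_total.
have hfr := psi_free hu hanti hY hfree hc hv huq hs.
have hsz : size L = #|calW B| by rewrite (perm_size pL) size_map cardE.
rewrite -hsz -(size_map (psiv A u)) -(eqP hfr).
apply: dimvS; apply/span_subvP => x /mapP [ek _ ->].
rewrite /ImPsi; apply: memv_span.
by apply/mapP; exists ((ek.1.1, ek.1.2), ek.2); rewrite ?mem_enum.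
Qed.


Unset Implicit Arguments.
Local Open Scope ring_scope.

Theorem proposition2p9 (F : fieldType) (U V : vectType F) (n : nat)
  (A : U -> U -> V) (u : n.-tuple U)
  (hAl : forall y : U, linear (A ^~ y))
  (hAr : forall x : U, linear (A x))
  (hAalt : forall x : U, A x x = 0)
  (hspan : forall W : {vspace V}, (forall x y : U, A x y \in W) -> W = fullv)
  (hbasis : basis_of fullv u)
  (hnot : ~ tree_height_one (calB A u)) :
  let m := \dim (fullv : {vspace V}) in
  let bound : int := (\sum_(2 <= i < m.+2) (n%:Z - i%:Z)) + (m%:Z - 2) in
  bound <= (#|calW (calB A u)|)%:Z /\ bound <= (\dim (ImPsi A u))%:Z.
Proof.
move=> m bound.
have hanti : forall x y, A y x = - A x y by move=> x y; apply: A_anti.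
have [_ hdim] := span_calB hAl hAr hAalt hspan hbasis.
have [[hY hfree hc _] hst] := calB_props A u.
have hc' : forall p, p \in Yseq n ->
    Aval A u p \in <<map (Aval A u) [seq q <- calB A u | (idx q <= idx p)%N]>>%VS.
  by move=> p pY; apply: hc => //; apply: hst.
have hu := basis_free hbasis.
have uB : uniq (calB A u) := map_uniq (free_uniq hfree).
have hlt : forall p, p \in calB A u -> (p.1 < p.2)%N.
  by move=> p pB; rewrite -mem_Yseq; apply: hY.
have h1 := combW uB hlt hnot.
have h2 := dim_ImPsi hu hanti hY hfree hc'.
have eb : bound = \sum_(2 <= i < (size (calB A u)).+2) (n%:Z - i%:Z) + ((size (calB A u))%:Z - 2).
  by rewrite /bound /m hdim.
rewrite eb; split => //.
move: h1 h2; set a := #|_|; set d := \dim _; lia.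
Qed.
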